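(* Let $S\subseteq(0,\infty)$ contain more than one point and let $T$ be a closed subset of $(0,\infty)$ with $\varnothing\ne T\ne(0,\infty)$. If $S$ divides $T$, then there exist $a>1$ and $B\subseteq[1,a)$ such that $T=a^{\mathbb{Z}}B:=\{a^kb:k\in\mathbb{Z},\ b\in B\}$ and $a\le s'/s$ for all $s<s'$ in $S$.
   Context: For $S,T_1,T_2\subseteq(0,\infty)$, $S$ links $T_1$ and $T_2$ if there is $c>0$ with $cS\cap T_1\ne\varnothing$ and $cS\cap T_2\ne\varnothing$, where $cS=\{cs:s\in S\}$. $S$ divides $T$ (written $S\mid T$) if $S$ does not link $T$ and $T^C:=(0,\infty)\setminus T$. *)

(* Defs.v *)
From Stdlib Require Import Reals.
Open Scope R_scope.

Definition scale (c : R) (S : R -> Prop) : R -> Prop :=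
  fun x => exists s, S s /\ x = c * s.

Definition links (S T1 T2 : R -> Prop) : Prop :=
  exists c, 0 < c /\ (exists x, scale c S x /\ T1 x) /\ (exists y, scale c S y /\ T2 y).

Definition complPos (T : R -> Prop) : R -> Prop := fun x => 0 < x /\ ~ T x.

Definition divides (S T : R -> Prop) : Prop := ~ links S T (complPos T).

Definition closed_in_pos (T : R -> Prop) : Prop :=
  (forall x, T x -> 0 < x) /\
  (forall x, 0 < x ->
     (forall eps, 0 < eps -> exists t, T t /\ Rabs (t - x) < eps) -> T x).

Definition zpow_set (a : R) (B : R -> Prop) : R -> Prop :=
  fun x => exists (k : Z) b, B b /\ x = powerRZ a k * b.

(* Main.v *)
Require Import Defs.
From Stdlib Require Import Reals Lra Classical.
Open Scope R_scope.

Lemma floor_pow (h y : R) : 1 < h -> 0 < y ->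
  exists k : Z, powerRZ h k <= y < powerRZ h (k + 1).
Proof.
  intros Hh Hy.
  assert (Hl : 0 < ln h) by (rewrite <- ln_1; apply ln_increasing; lra).
  set (r := ln y / ln h).
  destruct (archimed r) as [A1 A2].
  exists (up r - 1)%Z.
  rewrite !powerRZ_Rpower by lra. unfold Rpower.
  replace (up r - 1 + 1)%Z with (up r) by ring.
  rewrite minus_IZR.
  assert (Hr : r * ln h = ln y) by (unfold r; field; lra).
  split.
  - rewrite <- (exp_ln y) by lra.
    destruct (Req_dec (IZR (up r) - 1) r) as [E|E].
    + rewrite E, Hr; lra.
    + left; apply exp_increasing. rewrite <- Hr. apply Rmult_lt_compat_r; [lra|]. simpl in *. lra.
  - rewrite <- (exp_ln y) by lra. apply exp_increasing. rewrite <- Hr.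
    apply Rmult_lt_compat_r; lra.
Qed.

Definition Hs (T : R -> Prop) (h : R) : Prop := 0 < h /\ forall x, 0 < x -> (T x <-> T (h * x)).

Lemma Hs_inv T h : Hs T h -> Hs T (/ h).
Proof.
  intros [hp HH]. split; [apply Rinv_0_lt_compat; lra|].
  intros x xp. assert (0 < / h * x) by (apply Rmult_lt_0_compat; [apply Rinv_0_lt_compat|]; lra).
  rewrite (HH (/h * x)) by lra. replace (h * (/ h * x)) with x by (field; lra). tauto.
Qed.

Lemma Hs_mul T h g : Hs T h -> Hs T g -> Hs T (h * g).
Proof.
  intros [hp HH] [gp HG]. split; [nra|].
  intros x xp. rewrite (HG x xp). rewrite (HH (g*x)) by nra.
  rewrite Rmult_assoc. tauto.
Qed.

Lemma Hs_one T : Hs T 1.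
Proof. split; [lra|]. intros x _. rewrite Rmult_1_l. tauto. Qed.

Lemma Hs_pow T h : Hs T h -> forall k, Hs T (powerRZ h k).
Proof.
  intros H k. apply (powerRZ_ind (fun _ x y => Hs T x -> Hs T y)); auto.
  - intros; apply Hs_one.
  - intros x n Hx. induction n; simpl; [apply Hs_one| apply Hs_mul; auto].
  - intros x n Hx. apply Hs_inv. clear -Hx. induction n; simpl; [apply Hs_one| apply Hs_mul; auto].
Qed.

Theorem proposition6p3 (S T : R -> Prop) :
  (forall s, S s -> 0 < s) ->
  (exists s1 s2, S s1 /\ S s2 /\ s1 <> s2) ->
  closed_in_pos T ->
  (exists t, T t) ->
  (exists x, 0 < x /\ ~ T x) ->
  divides S T ->
  exists a (B : R -> Prop),
    1 < a /\
    (forall b, B b -> 1 <= b < a) /\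
    (forall x, T x <-> zpow_set a B x) /\
    (forall s s', S s -> S s' -> s < s' -> a <= s' / s).
Proof.
  intros Spos [s1 [s2 [S1 [S2 S12]]]] [Tpos Tcl] [t0 Tt0] [x0 [x0p nTx0]] Hdiv.
  assert (Key : forall c u v, 0 < c -> S u -> S v -> T (c * u) -> T (c * v)).
  { intros c u v cp Su Sv Tu. apply NNPP. intro nT. apply Hdiv.
    exists c. split; [auto|]. split.
    - exists (c*u). split; [exists u; auto| auto].
    - exists (c*v). split; [exists v; auto|]. split; [|auto].
      specialize (Spos v Sv). nra. }
  assert (Rat : forall u v, S u -> S v -> Hs T (v / u)).
  { intros u v Su Sv. pose proof (Spos u Su). pose proof (Spos v Sv).
    split; [apply Rdiv_lt_0_compat; lra|]. intros x xp.
    assert (cp : 0 < x / u) by (apply Rdiv_lt_0_compat; lra).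
    replace (v / u * x) with (x / u * v) by (field; lra).
    pattern x at 1; replace x with (x / u * u) by (field; lra).
    split; apply Key; auto. }
  assert (Hcl : forall h, 0 < h -> (forall eps, 0 < eps -> exists g, Hs T g /\ Rabs (g - h) < eps) -> Hs T h).
  { intros h hp Happ. split; [auto|]. intros x xp. split; intro Tx.
    - apply Tcl; [nra|]. intros eps ep.
      destruct (Happ (eps / x)) as [g [[gp Hg] Hgh]]; [apply Rdiv_lt_0_compat; lra|].
      exists (g * x). split; [apply (proj1 (Hg x xp)); auto|].
      replace (g * x - h * x) with ((g - h) * x) by ring.
      rewrite Rabs_mult, (Rabs_right x) by lra.
      apply Rmult_lt_compat_r with (r := x) in Hgh; auto.
      replace (eps / x * x) with eps in Hgh by (field; lra). lra.
    - apply Tcl; auto. intros eps ep.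
      destruct (Happ (Rmin (h/2) (eps * h / (2 * x)))) as [g [[gp Hg] Hgh]].
      { apply Rmin_glb_lt; [lra|]. apply Rdiv_lt_0_compat; nra. }
      assert (A1 : Rabs (g - h) < h/2) by (eapply Rlt_le_trans; [exact Hgh|apply Rmin_l]).
      assert (A2 : Rabs (g - h) < eps * h / (2 * x)) by (eapply Rlt_le_trans; [exact Hgh|apply Rmin_r]).
      apply Rabs_def2 in A1.
      exists (h * x / g). split.
      + apply (proj2 (Hg (h * x / g) ltac:(apply Rdiv_lt_0_compat; nra))).
        replace (g * (h * x / g)) with (h * x) by (field; lra). auto.
      + replace (h * x / g - x) with ((h - g) * (x / g)) by (field; lra).
        rewrite Rabs_mult, (Rabs_right (x / g)) by (left; apply Rdiv_lt_0_compat; lra).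
        rewrite Rabs_minus_sym.
        assert (x / g < 2 * x / h).
        { apply (Rmult_lt_reg_r (g * h)); [nra|].
          replace (x / g * (g * h)) with (x * h) by (field; lra).
          replace (2 * x / h * (g * h)) with (2 * x * g) by (field; lra). nra. }
        assert (0 <= Rabs (g - h)) by apply Rabs_pos.
        assert (Rabs (g - h) * (x / g) <= Rabs (g - h) * (2 * x / h)) by (apply Rmult_le_compat_l; lra).
        assert (Rabs (g - h) * (2 * x / h) < eps * h / (2 * x) * (2 * x / h))
          by (apply Rmult_lt_compat_r; [apply Rdiv_lt_0_compat; lra | auto]).
        replace (eps * h / (2 * x) * (2 * x / h)) with eps in * by (field; lra). lra. }
  assert (Ex : exists s s', S s /\ S s' /\ s < s').
  { destruct (Rlt_or_le s1 s2); [exists s1, s2; auto|].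
    exists s2, s1; repeat split; auto; lra. }
  destruct Ex as [s [s' [Ss [Ss' ss']]]].
  pose proof (Spos s Ss).
  set (E := fun y => Hs T (- y) /\ - y > 1).
  destruct (completeness E) as [m [mub mlub]].
  { exists (-1). intros y [_ Hy]. lra. }
  { exists (- (s'/s)). split; rewrite Ropp_involutive; [apply Rat; auto|].
    apply (Rmult_lt_reg_r s); auto. unfold Rdiv; rewrite Rmult_assoc, Rinv_l; lra. }
  set (a := - m).
  assert (Alow : forall h, Hs T h -> 1 < h -> a <= h).
  { intros h Hh h1. unfold a. enough (-h <= m) by lra. apply mub. split; rewrite Ropp_involutive; auto. }
  assert (Aapp : forall b, a < b -> exists h, Hs T h /\ 1 < h /\ h < b).
  { intros b ab. apply NNPP. intro NE. assert (m <= - b); [|unfold a in ab; lra].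
    apply mlub. intros y [Hy y1]. apply Rnot_lt_le. intro yb.
    apply NE. exists (-y). split; [exact Hy| split; lra]. }
  assert (a1 : 1 <= a).
  { unfold a. enough (m <= -1) by lra. apply mlub. intros y [_ Hy]. lra. }
  assert (a1' : 1 < a).
  { destruct a1 as [|a1]; auto. exfalso. apply nTx0. apply Tcl; auto.
    pose proof (Tpos t0 Tt0) as t0p.
    intros eps ep.
    destruct (Aapp (1 + eps / x0)) as [h [Hh [h1 h2]]].
    { rewrite <- a1. assert (0 < eps / x0) by (apply Rdiv_lt_0_compat; lra). lra. }
    destruct (floor_pow h (x0 / t0) h1) as [k [k1 k2]]; [apply Rdiv_lt_0_compat; lra|].
    exists (powerRZ h k * t0). split.
    - apply (proj1 (proj2 (Hs_pow T h Hh k) t0 t0p)); auto.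
    - rewrite powerRZ_add in k2 by lra. simpl in k2. rewrite Rmult_1_r in k2.
      pose proof (powerRZ_lt h k ltac:(lra)).
      apply (Rmult_le_compat_r t0) in k1; [|lra].
      apply (Rmult_lt_compat_r t0) in k2; [|lra].
      replace (x0 / t0 * t0) with x0 in * by (field; lra).
      assert (powerRZ h k * t0 <= x0) by lra.
      assert (x0 * (h - 1) < eps).
      { apply (Rmult_lt_compat_l x0) in h2; auto.
        replace (x0 * (1 + eps / x0)) with (x0 + eps) in h2 by (field; lra). nra. }
      rewrite Rabs_left1 by lra. nra. }
  assert (Ha : Hs T a).
  { apply Hcl; [lra|]. intros eps ep.
    destruct (Aapp (a + eps)) as [h [Hh [h1 h2]]]; [lra|].
    exists h. split; auto. pose proof (Alow h Hh h1).
    rewrite Rabs_right by lra. lra. }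
  exists a, (fun b => T b /\ 1 <= b < a).
  split; [auto|]. split; [intros b [_ Hb]; auto|]. split.
  - intro x. split.
    + intro Tx. pose proof (Tpos x Tx) as xp.
      destruct (floor_pow a x a1' xp) as [k [k1 k2]].
      pose proof (powerRZ_lt a k ltac:(lra)) as pk.
      rewrite powerRZ_add in k2 by lra. simpl in k2. rewrite Rmult_1_r in k2.
      exists k, (x / powerRZ a k). split; [|field; lra].
      assert (bp : 0 < x / powerRZ a k) by (apply Rdiv_lt_0_compat; lra).
      split.
      * apply (proj2 (proj2 (Hs_pow T a Ha k) _ bp)).
        replace (powerRZ a k * (x / powerRZ a k)) with x by (field; lra). auto.
      * split.
        -- apply (Rmult_le_reg_r (powerRZ a k)); auto.
           replace (x / powerRZ a k * powerRZ a k) with x by (field; lra). lra.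
        -- apply (Rmult_lt_reg_r (powerRZ a k)); auto.
           replace (x / powerRZ a k * powerRZ a k) with x by (field; lra). lra.
    + intros [k [b [[Tb _] ->]]]. apply (proj2 (Hs_pow T a Ha k) b (Tpos b Tb)). auto.
  - intros u v Su Sv uv. apply Alow; [apply Rat; auto|].
    pose proof (Spos u Su). apply (Rmult_lt_reg_r u); auto.
    unfold Rdiv; rewrite Rmult_assoc, Rinv_l; lra.
Qed.
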